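(* Let $\varepsilon>0$ and $\delta\in(0,1)$ be such that $k=\frac{1}{\varepsilon}\ln\left(\frac{e^{\varepsilon}+2\delta-1}{(e^{\varepsilon}+1)\delta}\right)$ is an integer. Let $X$ be a random variable with the $k$-truncated symmetric geometric distribution with parameter $1-e^{-\varepsilon}$, and let $\pi_{\mathrm{opt}}$ be the optimal partition selection primitive for $(\varepsilon,\delta)$-differential privacy. Then for all $n\in\mathbb{N}$, $\pi_{\mathrm{opt}}(n)=\Pr[n+X\ge k+1]$.
   Context: $\mathbb{N}=\{0,1,2,\dots\}$. For $p\in(0,1)$ and an integer $k\ge1$, the $k$-truncated symmetric geometric distribution with parameter $p$ is the distribution on $\mathbb{Z}$ with $\Pr[X=x]=c\,(1-p)^{|x|}$ for $x\in[-k,k]\cap\mathbb{Z}$ and $0$ otherwise, where $c=\frac{p}{1+(1-p)-2(1-p)^{k+1}}$. A partition selection primitive is a function $\pi:\mathbb{N}\to[0,1]$ with $\pi(0)=0$; it is $(\varepsilon,\delta)$-DP if, letting $\rho_\pi(n)$ be keep with probability $\pi(n)$ and drop otherwise, for all $n,n'\in\mathbb{N}$ with $|n-n'|=1$ and all $S\subseteq\{\mathrm{drop},\mathrm{keep}\}$, $\Pr[\rho_\pi(n)\in S]\le e^{\varepsilon}\Pr[\rho_\pi(n')\in S]+\delta$. The optimal primitive $\pi_{\mathrm{opt}}$ is the $(\varepsilon,\delta)$-DP primitive with $\pi(n)\le\pi_{\mathrm{opt}}(n)$ for every $(\varepsilon,\delta)$-DP primitive $\pi$ and every $n$; equivalently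 $\pi_{\mathrm{opt}}(0)=0$ and $\pi_{\mathrm{opt}}(n+1)=\min\left(e^{\varepsilon}\pi_{\mathrm{opt}}(n)+\delta,\,1-e^{-\varepsilon}(1-\pi_{\mathrm{opt}}(n)-\delta),\,1\right)$. *)

(* Defs.v *)
From Stdlib Require Import Reals Lra ZArith.
Open Scope R_scope.

Definition tsg_const (p : R) (k : nat) : R :=
  p / (1 + (1 - p) - 2 * (1 - p) ^ (S k)).

Definition tsg_pmf (p : R) (k : nat) (x : Z) : R :=
  if (Z.abs x <=? Z.of_nat k)%Z
  then tsg_const p k * (1 - p) ^ (Z.abs_nat x)
  else 0.

Definition tsg_prob (p : R) (k : nat) (P : Z -> bool) : R :=
  sum_f_R0 (fun i : nat =>
     let x := (Z.of_nat i - Z.of_nat k)%Z in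
     if P x then tsg_pmf p k x else 0) (2 * k).

Inductive outcome := drop | keep.

(** Pr[rho_pi(n) \in S], S a subset of {drop, keep}. *)
Definition rho_prob (pi : nat -> R) (n : nat) (Sset : outcome -> bool) : R :=
  (if Sset keep then pi n else 0) + (if Sset drop then 1 - pi n else 0).

Definition is_primitive (pi : nat -> R) : Prop :=
  pi 0%nat = 0 /\ forall n, 0 <= pi n <= 1.

Definition is_DP_primitive (eps delta : R) (pi : nat -> R) : Prop :=
  is_primitive pi /\
  forall n n' : nat, (n' = S n \/ n = S n') ->
    forall Sset : outcome -> bool,
      rho_prob pi n Sset <= exp eps * rho_prob pi n' Sset + delta.

Definition is_optimal_primitive (eps delta : R) (pi : nat -> R) : Prop :=
  is_DP_primitive eps delta pi /\
  forall pi', is_DP_primitive eps delta pi' -> forall n, pi' n <= pi n.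

(* Main.v *)
Require Import Defs.
From Stdlib Require Import Reals Lra Lia ZArith.
Open Scope R_scope.

Lemma sum_zero N : sum_f_R0 (fun _ => 0) N = 0.
Proof. induction N; simpl; lra. Qed.

Lemma sum_indicator (G : nat -> R) (m N : nat) :
  (m <= N)%nat ->
  sum_f_R0 (fun i => if Nat.eqb i m then G i else 0) N = G m.
Proof.
  induction N as [|N IH]; intros Hm.
  - assert (m = 0%nat) by lia; subst. simpl. reflexivity.
  - cbn [sum_f_R0]. destruct (Nat.eq_dec m (S N)) as [->|Hne].
    + rewrite Nat.eqb_refl.
      rewrite (sum_eq _ (fun _ => 0)).
      * rewrite sum_zero. lra.
      * intros i Hi. destruct (Nat.eqb_spec i (S N)); [lia|reflexivity].
    + rewrite IH by lia. replace (S N =? m) with false by (symmetry; apply Nat.eqb_neq; lia). lra.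
Qed.

Definition fsel (p : R) (k n : nat) : R :=
  tsg_prob p k (fun x => (Z.of_nat n + x >=? Z.of_nat k + 1)%Z).

Lemma fsel0 p k : fsel p k 0 = 0.
Proof.
  unfold fsel, tsg_prob.
  rewrite (sum_eq _ (fun _ => 0)).
  - induction (2*k)%nat; simpl; lra.
  - intros i Hi. cbv zeta. rewrite Z.geb_leb.
    destruct (Z.leb_spec (Z.of_nat k + 1) (Z.of_nat 0 + (Z.of_nat i - Z.of_nat k))); [lia|reflexivity].
Qed.

Lemma fsel_step_lt p k n : (n <= 2*k)%nat ->
  fsel p k (S n) = fsel p k n + tsg_pmf p k (Z.of_nat (2*k - n) - Z.of_nat k).
Proof.
  intros Hn. unfold fsel, tsg_prob.
  rewrite <- (sum_indicator (fun i => tsg_pmf p k (Z.of_nat i - Z.of_nat k)) (2*k-n) (2*k)) by lia.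
  rewrite <- plus_sum. apply sum_eq. intros i Hi. cbv zeta.
  rewrite !Z.geb_leb.
  destruct (Z.leb_spec (Z.of_nat k + 1) (Z.of_nat (S n) + (Z.of_nat i - Z.of_nat k)));
  destruct (Z.leb_spec (Z.of_nat k + 1) (Z.of_nat n + (Z.of_nat i - Z.of_nat k)));
  destruct (Nat.eqb_spec i (2*k-n)); try lia; try lra.
Qed.

Lemma fsel_step_ge p k n : (2*k < n)%nat ->
  fsel p k (S n) = fsel p k n.
Proof.
  intros Hn. unfold fsel, tsg_prob. apply sum_eq. intros i Hi. cbv zeta.
  rewrite !Z.geb_leb.
  destruct (Z.leb_spec (Z.of_nat k + 1) (Z.of_nat (S n) + (Z.of_nat i - Z.of_nat k)));
  destruct (Z.leb_spec (Z.of_nat k + 1) (Z.of_nat n + (Z.of_nat i - Z.of_nat k))); try lia; lra.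
Qed.

Lemma pmf_val p k n : (n <= 2*k)%nat ->
  tsg_pmf p k (Z.of_nat (2*k - n) - Z.of_nat k) =
  tsg_const p k * (1 - p) ^ (if Nat.leb n k then (k - n) else (n - k))%nat.
Proof.
  intros Hn. unfold tsg_pmf.
  destruct (Z.leb_spec (Z.abs (Z.of_nat (2 * k - n) - Z.of_nat k)) (Z.of_nat k)); [|lia].
  f_equal. f_equal. destruct (Nat.leb_spec n k); lia.
Qed.
Lemma exp_pow_nat x k : exp x ^ k = exp (INR k * x).
Proof.
  induction k as [|k IH].
  - simpl. rewrite Rmult_0_l, exp_0. reflexivity.
  - rewrite S_INR, <- tech_pow_Rmult, IH, <- exp_plus. f_equal. ring.
Qed.

Lemma key_A (eps delta : R) (k : nat)
  (Heps : 0 < eps) (Hdelta : 0 < delta < 1)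
  (Hk : INR k = / eps * ln ((exp eps + 2 * delta - 1) / ((exp eps + 1) * delta))) :
  exp eps ^ k * (exp eps + 1) * delta = exp eps + 2 * delta - 1.
Proof.
  assert (Ha : 1 < exp eps) by (rewrite <- exp_0; apply exp_increasing; lra).
  rewrite exp_pow_nat.
  replace (INR k * eps) with (ln ((exp eps + 2 * delta - 1) / ((exp eps + 1) * delta))).
  2:{ rewrite Hk. field. lra. }
  rewrite exp_ln.
  - field. split; lra.
  - apply Rdiv_lt_0_compat; [lra|]. apply Rmult_lt_0_compat; lra.
Qed.

Lemma key_c (eps delta : R) (k : nat)
  (Heps : 0 < eps) (Hdelta : 0 < delta < 1)
  (HA : exp eps ^ k * (exp eps + 1) * delta = exp eps + 2 * delta - 1) :
  forall m, (m <= k)%nat ->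
  tsg_const (1 - exp (- eps)) k * (1 - (1 - exp (- eps))) ^ m = delta * exp eps ^ (k - m).
Proof.
  intros m Hm.
  assert (Ha : 1 < exp eps) by (rewrite <- exp_0; apply exp_increasing; lra).
  set (a := exp eps) in *.
  replace (1 - (1 - exp (- eps))) with (/ a) by (unfold a; rewrite exp_Ropp; ring).
  unfold tsg_const.
  replace (1 - exp (- eps)) with (1 - / a) by (unfold a; rewrite exp_Ropp; ring).
  replace (1 - (1 - / a)) with (/ a) by ring.
  rewrite !pow_inv.
  assert (HAp : 0 < a ^ k) by (apply pow_lt; lra).
  assert (Hmp : 0 < a ^ m) by (apply pow_lt; lra).
  assert (Hsplit : a ^ k = a ^ m * a ^ (k - m)).
  { rewrite <- pow_add. f_equal. lia. }
  rewrite <- tech_pow_Rmult.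
  assert (Hden : a ^ k * (a + 1) - 2 = (a - 1) / delta).
  { apply (Rmult_eq_reg_r delta); [|lra]. unfold Rdiv. rewrite Rmult_assoc, Rinv_l by lra. nra. }
  assert (Hden2 : 0 < a ^ k * (a + 1) - 2).
  { rewrite Hden. apply Rdiv_lt_0_compat; lra. }
  replace (1 + / a - 2 * / (a * a ^ k)) with ((a ^ k * (a+1) - 2) / (a * a ^ k)) by (field; lra).
  rewrite Hden. rewrite Hsplit. field. repeat split; try lra.
  apply pow_nonzero; lra.
Qed.

Definition hh (a delta : R) (m : nat) := delta * (a ^ m - 1) / (a - 1).

Lemma closed_forms (eps delta : R) (k : nat)
  (Heps : 0 < eps) (Hdelta : 0 < delta < 1)
  (HA : exp eps ^ k * (exp eps + 1) * delta = exp eps + 2 * delta - 1) :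
  let a := exp eps in let f := fsel (1 - exp (- eps)) k in
  (forall j, (j <= S k)%nat -> f j = hh a delta j) /\
  (forall j, (j <= k)%nat -> f (S k + j)%nat = 1 - hh a delta (k - j)) /\
  (forall j, f (S (2 * k) + j)%nat = 1).
Proof.
  intros a f. fold a in HA.
  assert (Ha : 1 < a) by (unfold a; rewrite <- exp_0; apply exp_increasing; lra).
  assert (Hc := key_c eps delta k Heps Hdelta HA).
  assert (D1 : forall n, (n <= k)%nat -> f (S n) = f n + delta * a ^ n).
  { intros n Hn. unfold f. rewrite fsel_step_lt by lia. rewrite pmf_val by lia.
    destruct (Nat.leb_spec n k); [|lia]. rewrite Hc by lia. do 3 f_equal. lia. }
  assert (D2 : forall n, (k <= n <= 2 * k)%nat -> f (S n) = f n + delta * a ^ (2 * k - n)).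
  { intros n Hn. unfold f. rewrite fsel_step_lt by lia. rewrite pmf_val by lia.
    destruct (Nat.leb_spec n k).
    - assert (n = k) by lia. subst n. rewrite Hc by lia. do 3 f_equal. lia.
    - rewrite Hc by lia. do 3 f_equal. lia. }
  assert (L1 : forall j, (j <= S k)%nat -> f j = hh a delta j).
  { induction j as [|j IH]; intros Hj.
    - unfold f. rewrite fsel0. unfold hh. simpl. field. lra.
    - rewrite D1 by lia. rewrite IH by lia. unfold hh. simpl. field. lra. }
  assert (K : hh a delta k + hh a delta (S k) = 1).
  { unfold hh. simpl. apply (Rmult_eq_reg_r (a - 1)); [|lra].
    field_simplify; try lra. }
  assert (L2 : forall j, (j <= k)%nat -> f (S k + j)%nat = 1 - hh a delta (k - j)).
  { induction j as [|j IH]; intros Hj.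
    - rewrite Nat.add_0_r, L1 by lia. rewrite Nat.sub_0_r. lra.
    - replace (S k + S j)%nat with (S (S k + j)) by lia.
      rewrite D2 by lia. rewrite IH by lia.
      replace (k - j)%nat with (S (k - S j)) by lia.
      replace (2 * k - (S k + j))%nat with (k - S j)%nat by lia.
      unfold hh. simpl. field. lra. }
  split; [exact L1|]. split; [exact L2|].
  induction j as [|j IH].
  - replace (S (2 * k) + 0)%nat with (S k + k)%nat by lia. rewrite L2 by lia.
    rewrite Nat.sub_diag. unfold hh. simpl. field. lra.
  - replace (S (2 * k) + S j)%nat with (S (S (2 * k) + j)) by lia.
    unfold f. rewrite fsel_step_ge by lia. exact IH.
Qed.

Lemma hh_S a delta m : a <> 1 -> hh a delta (S m) = a * hh a delta m + delta.
Proof. intros H. unfold hh. simpl. field. intro; apply H; lra. Qed.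

Lemma hh_bound a delta k m : 1 < a -> 0 < delta ->
  a ^ k * (a + 1) * delta = a + 2 * delta - 1 -> (m <= k)%nat ->
  0 <= hh a delta m /\ (a + 1) * hh a delta m <= 1 - delta.
Proof.
  intros Ha Hd HA Hm.
  assert (H1 : 1 <= a ^ m) by (apply pow_R1_Rle; lra).
  assert (H2 : a ^ m <= a ^ k) by (apply Rle_pow; lra || lia).
  assert (Ht : hh a delta m * (a - 1) = delta * (a ^ m - 1)) by (unfold hh; field; lra).
  set (t := hh a delta m) in *.
  assert (P1 : 0 <= t * (a - 1)) by (rewrite Ht; apply Rmult_le_pos; lra).
  assert (P2 : ((a + 1) * t - (1 - delta)) * (a - 1) <= 0).
  { replace (((a + 1) * t - (1 - delta)) * (a - 1)) with
      ((a + 1) * (t * (a - 1)) - (1 - delta) * (a - 1)) by ring.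
    rewrite Ht. assert (0 <= (a + 1) * delta * (a ^ k - a ^ m)) by
      (apply Rmult_le_pos; [apply Rmult_le_pos|]; lra). nra. }
  split.
  - destruct (Rle_lt_dec 0 t); auto. exfalso. nra.
  - destruct (Rle_lt_dec ((a + 1) * t) (1 - delta)); auto. exfalso. nra.
Qed.

Lemma props (eps delta : R) (k : nat)
  (Heps : 0 < eps) (Hdelta : 0 < delta < 1)
  (HA : exp eps ^ k * (exp eps + 1) * delta = exp eps + 2 * delta - 1) (n : nat) :
  let a := exp eps in let f := fsel (1 - exp (- eps)) k in
  (0 <= f n <= 1) /\ f n <= f (S n) /\ f (S n) <= a * f n + delta /\
  1 - f n <= a * (1 - f (S n)) + delta /\
  (f (S n) = a * f n + delta \/ a * f (S n) = a - 1 + f n + delta \/ f (S n) = 1).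
Proof.
  intros a f.
  assert (Ha : 1 < a) by (unfold a; rewrite <- exp_0; apply exp_increasing; lra).
  destruct (closed_forms eps delta k Heps Hdelta HA) as [L1 [L2 L3]].
  fold a f in L1, L2, L3. fold a in HA.
  assert (Ha1 : a <> 1) by lra.
  destruct (le_lt_dec n k) as [Hn|Hn].
  - rewrite (L1 n) by lia. rewrite (L1 (S n)) by lia. rewrite hh_S by exact Ha1.
    destruct (hh_bound a delta k n Ha (proj1 Hdelta) HA Hn) as [B1 B2].
    set (t := hh a delta n) in *.
    repeat split; try nra.
  - destruct (le_lt_dec n (2 * k)) as [Hn2|Hn2].
    + replace n with (S k + (n - S k))%nat by lia.
      replace (S (S k + (n - S k))) with (S k + S (n - S k))%nat by lia.
      rewrite !L2 by lia.
      replace (k - (n - S k))%nat with (S (k - S (n - S k))) by lia.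
      rewrite hh_S by exact Ha1.
      destruct (hh_bound a delta k (k - S (n - S k)) Ha (proj1 Hdelta) HA ltac:(lia)) as [B1 B2].
      set (t := hh a delta _) in *.
      repeat split; try nra.
    + replace n with (S (2 * k) + (n - S (2 * k)))%nat by lia.
      replace (S (S (2 * k) + (n - S (2 * k)))) with (S (2 * k) + S (n - S (2 * k)))%nat by lia.
      rewrite !L3.
      repeat split; try nra.
Qed.

Theorem theorem5 (eps delta : R) (k : nat)
  (Heps : 0 < eps) (Hdelta : 0 < delta < 1)
  (Hk : INR k = / eps * ln ((exp eps + 2 * delta - 1) / ((exp eps + 1) * delta)))
  (pi_opt : nat -> R) (Hopt : is_optimal_primitive eps delta pi_opt) :
  forall n : nat,
    pi_opt n = tsg_prob (1 - exp (- eps)) k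
                 (fun x => (Z.of_nat n + x >=? Z.of_nat k + 1)%Z).
Proof.
  intros n.
  change (pi_opt n = fsel (1 - exp (- eps)) k n).
  assert (HA := key_A eps delta k Heps Hdelta Hk).
  assert (P := props eps delta k Heps Hdelta HA).
  set (f := fsel (1 - exp (- eps)) k) in *.
  set (a := exp eps) in *.
  assert (Ha : 1 < a) by (unfold a; rewrite <- exp_0; apply exp_increasing; lra).
  destruct Hopt as [[[Hp0 Hpb] Hdp] Hmax].
  assert (Fdp : is_DP_primitive eps delta f).
  { split.
    - split; [apply fsel0|]. intros m. apply (P m).
    - intros m m' Hmm Sset. unfold rho_prob. fold a.
      destruct Hmm as [-> | ->].
      + destruct (P m) as [[B0 B1] [M [C [D E]]]].
        destruct (P (S m)) as [[B0' B1'] _].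
        destruct (Sset keep), (Sset drop); nra.
      + destruct (P m') as [[B0 B1] [M [C [D E]]]].
        destruct (P (S m')) as [[B0' B1'] _].
        destruct (Sset keep), (Sset drop); nra. }
  apply Rle_antisym; [|exact (Hmax f Fdp n)].
  induction n as [|n IH].
  - rewrite Hp0. unfold f. rewrite fsel0. lra.
  - assert (K1 := Hdp (S n) n (or_intror eq_refl) (fun o => match o with keep => true | drop => false end)).
    assert (K2 := Hdp n (S n) (or_introl eq_refl) (fun o => match o with keep => false | drop => true end)).
    unfold rho_prob in K1, K2. simpl in K1, K2. fold a in K1, K2.
    destruct (Hpb (S n)). destruct (Hpb n).
    destruct (P n) as [[B0 B1] [M [C [D E]]]].
    destruct E as [E|[E|E]]; nra.
Qed.
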